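(* For the interval algorithm $\phi_{\mathrm{int}}$ generating $Y^n$ from the coin process $\mathbf X$, with stopping time $T$, for every integer $m\ge0$ and all real numbers $\lambda,\tau\ge0$, \[ \Pr(T>m)\ \le\ P_{X^m}(\mathcal S_m^c(\lambda)) + P_{Y^n}(\mathcal T_n^c(\tau)) + 2^{-\lambda+\tau+1}, \] where $\mathcal S_m(\lambda)=\{x^m\in\mathcal X^m:\log\frac{1}{P_{X^m}(x^m)}\ge\lambda\}$ and $\mathcal T_n(\tau)=\{y^n\in\mathcal Y^n:\log\frac{1}{P_{Y^n}(y^n)}\le\tau\}$, and complements are in $\mathcal X^m$, $\mathcal Y^n$.
   Context: Logarithms are base 2. $\mathcal X=\{1,\dots,M\}$, $\mathcal Y=\{1,\dots,N\}$ are finite sets; the coin process $\mathbf X=\{X^m\}_{m\ge1}$ on $\mathcal X$ and target process $\mathbf Y=\{Y^n\}_{n\ge1}$ on $\mathcal Y$ are arbitrary processes given by consistent families of distributions $P_{X^m}$, $P_{Y^n}$. Interval algorithm: for a finite sequence $s\in\mathcal X^i$ define an interval $\mathcal I_s=[\underline\alpha_s,\overline\alpha_s)\subseteq[0,1)$ recursively by $\mathcal I_{\bot}=[0,1)$ for the empty sequence and, for $x\in\mathcal X$, $\underline\alpha_{sx}=\underline\alpha_s+(\overline\alpha_s-\underline\alpha_s)\sum_{k=1}^{x-1}P_{X_{i+1}|X^i}(k|s)$, $\overline\alpha_{sx}=\underline\alpha_s+(\overline\alpha_s-\underline\alpha_s)\sum_{k=1}^{x}P_{X_{i+1}|X^i}(k|s)$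 (conditional probabilities given a probability-zero prefix may be chosen arbitrarily); thus $|\mathcal I_s|=P_{X^i}(s)$. Define $\mathcal J_t=[\underline\beta_t,\overline\beta_t)$ for $t\in\mathcal Y^j$ in the same way from the conditional distributions $P_{Y_{j+1}|Y^j}$, so $|\mathcal J_t|=P_{Y^j}(t)$ and $\{\mathcal J_{y^n}\}_{y^n\in\mathcal Y^n}$ partitions $[0,1)$. The interval algorithm observes $X_1,X_2,\dots$ and stops at the first time $m$ such that $\mathcal I_{X^m}\subseteq\mathcal J_{y^n}$ for some $y^n\in\mathcal Y^n$, outputting that $y^n$ (for $P_{X^m}(X^m)>0$ this $y^n$ is unique; it may be run sequentially, outputting $y_j$ as soon as $\mathcal I_{X^i}\subseteq\mathcal J_{y^j}$, with the same stopping time and output). Its stopping time $T$ is this first time ($T=\infty$ if it never happens); $\phi_{\mathrm{int}}(x^m)$ denotes the output if the algorithm has stopped after reading $x^m$, and $\bot$ otherwise. *)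

(* Defs.v *)
From Stdlib Require Import Reals List Classical ClassicalEpsilon.
Import ListNotations.
Open Scope R_scope.

Definition in_alph (K : nat) (s : list nat) : Prop :=
  forall x, In x s -> (1 <= x <= K)%nat.

Fixpoint words (K m : nat) : list (list nat) :=
  match m with
  | O => [ [] ]
  | S m' => flat_map (fun w => map (fun x => w ++ [x]) (seq 1 K)) (words K m')
  end.

Definition sumR (l : list R) : R := fold_right Rplus 0 l.

(* A conditional kernel c s k = P_{X_{i+1}|X^i}(k|s) is a probability
   distribution on {1..K} for every admissible prefix s, and the joint
   distributions P satisfy the chain rule with respect to it
   (for prefixes of probability zero, c s is arbitrary). *)
Definition process (K : nat) (P : list nat -> R) (c : list nat -> nat -> R) : Prop :=
  P [] = 1 /\
  forall s, in_alph K s ->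
    (forall k, (1 <= k <= K)%nat -> 0 <= c s k) /\
    sumR (map (c s) (seq 1 K)) = 1 /\
    (forall k, (1 <= k <= K)%nat -> P (s ++ [k]) = P s * c s k).

Definition cumlow (c : list nat -> nat -> R) (s : list nat) (x : nat) : R :=
  sumR (map (c s) (seq 1 (x - 1))).
Definition cumhigh (c : list nat -> nat -> R) (s : list nat) (x : nat) : R :=
  sumR (map (c s) (seq 1 x)).

(* Interval [lo, hi) for the sequence pre ++ rest, starting from the
   interval (lo, hi) of pre. *)
Fixpoint intv_aux (c : list nat -> nat -> R) (pre rest : list nat) (lo hi : R)
  : R * R :=
  match rest with
  | [] => (lo, hi)
  | x :: r =>
      intv_aux c (pre ++ [x]) r
        (lo + (hi - lo) * cumlow c pre x)
        (lo + (hi - lo) * cumhigh c pre x)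
  end.

Definition interval (c : list nat -> nat -> R) (s : list nat) : R * R :=
  intv_aux c [] s 0 1.

Definition subint (I J : R * R) : Prop :=
  forall r, fst I <= r < snd I -> fst J <= r < snd J.

Definition stopped (cX cY : list nat -> nat -> R) (N n : nat) (xm : list nat) : Prop :=
  exists i, (i <= length xm)%nat /\
    exists yn, In yn (words N n) /\ subint (interval cX (firstn i xm)) (interval cY yn).

Definition prob (K m : nat) (P : list nat -> R) (E : list nat -> Prop) : R :=
  sumR (map (fun w => if excluded_middle_informative (E w) then P w else 0)
            (words K m)).

Definition log2 (x : R) : R := ln x / ln 2.

(* S_m(λ) = {x^m : log(1/P(x^m)) >= λ}, with log(1/0) = +∞. *)
Definition S_set (PX : list nat -> R) (lam : R) (xm : list nat) : Prop :=
  PX xm = 0 \/ log2 (1 / PX xm) >= lam.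

Definition T_set (PY : list nat -> R) (tau : R) (yn : list nat) : Prop :=
  0 < PY yn /\ log2 (1 / PY yn) <= tau.

(* Main.v *)
Require Import Defs.
From Stdlib Require Import Reals List Lra Lia Classical ClassicalEpsilon.
Import ListNotations.
Open Scope R_scope.

Ltac rdes := repeat match goal with
  | |- context[Rle_dec ?a ?b] => destruct (Rle_dec a b)
  | H : context[Rle_dec ?a ?b] |- _ => destruct (Rle_dec a b) end.

Definition ind (P : Prop) : R := if excluded_middle_informative P then 1 else 0.
Lemma ind_ge0 P : 0 <= ind P.
Proof. unfold ind; destruct excluded_middle_informative; lra. Qed.
Lemma ind_le1 P : ind P <= 1.
Proof. unfold ind; destruct excluded_middle_informative; lra. Qed.

Lemma sumR_app l1 l2 : sumR (l1 ++ l2) = sumR l1 + sumR l2.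
Proof. induction l1; simpl; [ring| rewrite IHl1; ring]. Qed.

Lemma sumR_plus {A} (f g : A -> R) l :
  sumR (map (fun x => f x + g x) l) = sumR (map f l) + sumR (map g l).
Proof. induction l; simpl; [ring | rewrite IHl; ring]. Qed.

Lemma sumR_scal {A} (k : R) (f : A -> R) l :
  sumR (map (fun x => k * f x) l) = k * sumR (map f l).
Proof. induction l; simpl; [ring | rewrite IHl; ring]. Qed.

Lemma sumR_le {A} (f g : A -> R) l :
  (forall x, In x l -> f x <= g x) -> sumR (map f l) <= sumR (map g l).
Proof.
  induction l; simpl; intros H; [lra|].
  pose proof (H a (or_introl eq_refl)).
  pose proof (IHl (fun x Hx => H x (or_intror Hx))). lra.
Qed.

Lemma sumR_ext {A} (f g : A -> R) l :
  (forall x, In x l -> f x = g x) -> sumR (map f l) = sumR (map g l).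
Proof. intros H; f_equal; apply map_ext_in; auto. Qed.

Lemma sumR_zero {A} (l : list A) : sumR (map (fun _ => 0) l) = 0.
Proof. induction l; simpl; [ring | rewrite IHl; ring]. Qed.

Lemma sumR_swap {A B} (F : A -> B -> R) l1 l2 :
  sumR (map (fun x => sumR (map (fun y => F x y) l2)) l1)
  = sumR (map (fun y => sumR (map (fun x => F x y) l1)) l2).
Proof.
  induction l1 as [|a l1 IH]; simpl.
  - symmetry. apply (sumR_zero l2).
  - rewrite IH.
    rewrite <- (sumR_plus (fun y => F a y) (fun y => sumR (map (fun x => F x y) l1))).
    reflexivity.
Qed.

Fixpoint tiles (l : list (R*R)) (a b : R) : Prop :=
  match l with
  | [] => a = b
  | p :: r => fst p = a /\ fst p <= snd p /\ tiles r (snd p) b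
  end.

Lemma tiles_le l a b : tiles l a b -> a <= b.
Proof.
  revert a; induction l as [|p r IH]; simpl; intros a H; [lra|].
  destruct H as [H1 [H2 H3]]. apply IH in H3. lra.
Qed.

Lemma tiles_in l a b p : tiles l a b -> In p l -> a <= fst p /\ fst p <= snd p /\ snd p <= b.
Proof.
  revert a; induction l as [|q r IH]; simpl; intros a H Hin; [contradiction|].
  destruct H as [H1 [H2 H3]]. destruct Hin as [<-|Hin].
  - pose proof (tiles_le _ _ _ H3). lra.
  - destruct (IH _ H3 Hin) as [? [? ?]]. pose proof (tiles_le _ _ _ H3). lra.
Qed.

Lemma tiles_app l1 l2 a b c : tiles l1 a b -> tiles l2 b c -> tiles (l1 ++ l2) a c.
Proof.
  revert a; induction l1 as [|p r IH]; simpl; intros a H1 H2; [subst; auto|].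
  destruct H1 as [? [? ?]]. repeat split; eauto.
Qed.

Definition lenI (p : R*R) : R := snd p - fst p.
Definition ov (I J : R*R) : R := Rmax 0 (Rmin (snd I) (snd J) - Rmax (fst I) (fst J)).

Lemma ov_sym I J : ov I J = ov J I.
Proof. unfold ov, Rmax, Rmin; rdes; lra. Qed.
Lemma ov_ge0 I J : 0 <= ov I J.
Proof. unfold ov; apply Rmax_l. Qed.

Lemma tiles_sum l a b : tiles l a b -> sumR (map lenI l) = b - a.
Proof.
  revert a; induction l as [|p r IH]; simpl; intros a H; [lra|].
  destruct H as [H1 [H2 H3]]. rewrite (IH _ H3). unfold lenI. lra.
Qed.

Lemma ov_zero l d b0 a b : tiles l d b0 -> b <= d -> sumR (map (ov (a,b)) l) = 0.
Proof.
  revert d; induction l as [|[c e] r IH]; simpl; intros d H Hb; [reflexivity|].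
  destruct H as [H1 [H2 H3]]. simpl in *. rewrite (IH e H3) by lra.
  unfold ov; simpl. unfold Rmax, Rmin; rdes; lra.
Qed.

Lemma ov_sum_pair l a0 b0 a b : tiles l a0 b0 -> a0 <= a -> a <= b -> b <= b0 ->
  sumR (map (ov (a,b)) l) = b - a.
Proof.
  revert a0 a; induction l as [|[c d] r IH]; simpl; intros a0 a H Ha Hab Hb.
  - lra.
  - destruct H as [H1 [H2 H3]]. simpl in *.
    destruct (Rle_dec b d) as [Hbd|Hbd].
    + rewrite (ov_zero r d b0 a b H3 Hbd). unfold ov; simpl; unfold Rmax, Rmin; rdes; lra.
    + destruct (Rle_dec d a) as [Hda|Hda].
      * rewrite (IH d a H3) by lra. unfold ov; simpl; unfold Rmax, Rmin; rdes; lra.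
      * assert (E: sumR (map (ov (a,b)) r) = sumR (map (ov (d,b)) r)).
        { apply sumR_ext. intros p Hp. destruct (tiles_in _ _ _ p H3 Hp) as [? [? ?]].
          unfold ov; simpl. unfold Rmax, Rmin; rdes; lra. }
        rewrite E, (IH d d H3) by lra. unfold ov; simpl; unfold Rmax, Rmin; rdes; lra.
Qed.

Lemma ov_sum l a0 b0 I : tiles l a0 b0 -> a0 <= fst I -> fst I <= snd I -> snd I <= b0 ->
  sumR (map (ov I) l) = lenI I.
Proof. destruct I as [a b]; simpl; intros; unfold lenI; simpl; eapply ov_sum_pair; eauto. Qed.

Definition inside (t : R) (p : R*R) : R := ind (fst p < t < snd p).

Lemma inside_zero l a b t : tiles l a b -> t <= a -> sumR (map (inside t) l) = 0.
Proof.
  revert a; induction l as [|[c d] r IH]; simpl; intros a H Ht; [reflexivity|].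
  destruct H as [H1 [H2 H3]]; simpl in *. rewrite (IH d H3) by lra.
  unfold inside, ind; simpl; destruct excluded_middle_informative; lra.
Qed.

Lemma inside_le1 l a b t : tiles l a b -> sumR (map (inside t) l) <= 1.
Proof.
  revert a; induction l as [|[c d] r IH]; simpl; intros a H; [lra|].
  destruct H as [H1 [H2 H3]]; simpl in *.
  assert (Hh : inside t (c,d) = ind (c < t < d)) by reflexivity. rewrite Hh.
  unfold ind. destruct excluded_middle_informative.
  - rewrite (inside_zero r d b t H3) by lra. lra.
  - specialize (IH d H3). lra.
Qed.

Definition cs (f : nat -> R) (n : nat) : R := sumR (map f (seq 1 n)).
Lemma cs_S f n : cs f (S n) = cs f n + f (S n).
Proof. unfold cs. rewrite seq_S, map_app, sumR_app. simpl. ring. Qed.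

Lemma intv_aux_snoc c r pre lo hi x :
  intv_aux c pre (r ++ [x]) lo hi =
  (fst (intv_aux c pre r lo hi) + lenI (intv_aux c pre r lo hi) * cumlow c (pre ++ r) x,
   fst (intv_aux c pre r lo hi) + lenI (intv_aux c pre r lo hi) * cumhigh c (pre ++ r) x).
Proof.
  revert pre lo hi; induction r as [|a r IH]; intros pre lo hi; simpl.
  - rewrite app_nil_r. reflexivity.
  - rewrite IH. rewrite <- app_assoc. reflexivity.
Qed.

Lemma interval_snoc c w x :
  interval c (w ++ [x]) =
  (fst (interval c w) + lenI (interval c w) * cumlow c w x,
   fst (interval c w) + lenI (interval c w) * cumhigh c w x).
Proof. unfold interval. rewrite intv_aux_snoc. reflexivity. Qed.

Lemma proc_len K P c w : process K P c -> in_alph K w ->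
  lenI (interval c w) = P w /\ 0 <= P w.
Proof.
  intros [H0 HP]. induction w as [|x w IH] using rev_ind; intros Hw.
  - unfold interval, lenI; simpl. rewrite H0. lra.
  - assert (Hw' : in_alph K w) by (intros y Hy; apply Hw; apply in_or_app; auto).
    assert (Hx : (1 <= x <= K)%nat) by (apply Hw; apply in_or_app; right; simpl; auto).
    destruct (IH Hw') as [IH1 IH2].
    destruct (HP w Hw') as [Hc [_ Hch]].
    rewrite (Hch x Hx). rewrite interval_snoc. unfold lenI at 1; simpl.
    unfold cumlow, cumhigh. destruct x as [|x]; [lia|].
    replace (S x - 1)%nat with x by lia.
    change (sumR (map (c w) (seq 1 (S x)))) with (cs (c w) (S x)).
    change (sumR (map (c w) (seq 1 x))) with (cs (c w) x).
    rewrite cs_S, IH1. split; [ring|].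
    apply Rmult_le_pos; auto.
Qed.

Lemma tiles_children (f : nat -> R) lo L K0 : 0 <= L ->
  (forall k, (1 <= k <= K0)%nat -> 0 <= f k) ->
  forall k j, (j + k <= K0)%nat ->
  tiles (map (fun x => (lo + L * cs f (x - 1), lo + L * cs f x)) (seq (S j) k))
        (lo + L * cs f j) (lo + L * cs f (j + k)).
Proof.
  intros HL Hf k. induction k as [|k IH]; intros j Hjk.
  - simpl. rewrite Nat.add_0_r. reflexivity.
  - cbn [seq map tiles fst snd].
    replace (S j - 1)%nat with j by lia.
    split; [reflexivity|split].
    + rewrite cs_S. assert (0 <= f (S j)) by (apply Hf; lia).
      assert (0 <= L * f (S j)) by (apply Rmult_le_pos; auto). lra.
    + rewrite Nat.add_succ_r. apply (IH (S j)). lia.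
Qed.

Lemma children_tile K P c w : process K P c -> in_alph K w ->
  tiles (map (fun x => interval c (w ++ [x])) (seq 1 K))
        (fst (interval c w)) (snd (interval c w)).
Proof.
  intros HP Hw. destruct (proc_len K P c w HP Hw) as [Hl Hp].
  destruct HP as [H0 HP]. destruct (HP w Hw) as [Hc [Hs _]].
  rewrite (map_ext _ (fun x => (fst (interval c w) + lenI (interval c w) * cs (c w) (x - 1),
     fst (interval c w) + lenI (interval c w) * cs (c w) x)))
    by (intros x; apply interval_snoc).
  assert (HL : 0 <= lenI (interval c w)) by lra.
  pose proof (tiles_children (c w) (fst (interval c w)) (lenI (interval c w)) K HL Hc K 0%nat (le_n _)) as T.
  replace (fst (interval c w) + lenI (interval c w) * cs (c w) 0) with (fst (interval c w)) in T
    by (unfold cs; simpl; ring).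
  replace (cs (c w) (0 + K)) with 1 in T by (symmetry; exact Hs).
  replace (fst (interval c w) + lenI (interval c w) * 1) with (snd (interval c w)) in T
    by (unfold lenI; ring).
  exact T.
Qed.

Lemma words_alph K m w : In w (words K m) -> in_alph K w.
Proof.
  revert w; induction m as [|m IH]; simpl; intros w Hw.
  - destruct Hw as [<-|[]]. intros y [].
  - apply in_flat_map in Hw. destruct Hw as [w0 [Hw0 Hw]].
    apply in_map_iff in Hw. destruct Hw as [x [<- Hx]].
    apply in_seq in Hx. intros y Hy. apply in_app_or in Hy.
    destruct Hy as [Hy|[<-|[]]]. apply (IH w0 Hw0 y Hy). lia.
Qed.

Lemma map_flat_map' {A B C} (f : B -> C) (g : A -> list B) l :
  map f (flat_map g l) = flat_map (fun x => map f (g x)) l.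
Proof. induction l; simpl; [reflexivity|]. rewrite map_app, IHl. reflexivity. Qed.

Lemma tiles_flat {A} (F : A -> R*R) (G : A -> list (R*R)) ws a b :
  tiles (map F ws) a b -> (forall w, In w ws -> tiles (G w) (fst (F w)) (snd (F w))) ->
  tiles (flat_map G ws) a b.
Proof.
  revert a; induction ws as [|w ws IH]; simpl; intros a H HG; [exact H|].
  destruct H as [H1 [H2 H3]]. apply tiles_app with (snd (F w)).
  - rewrite <- H1. apply HG; auto.
  - apply IH; auto.
Qed.

Lemma words_tile K P c m : process K P c -> tiles (map (interval c) (words K m)) 0 1.
Proof.
  intros HP. induction m as [|m IH]; simpl.
  - unfold interval; simpl. repeat split; lra.
  - rewrite map_flat_map'. apply tiles_flat with (F := interval c); [exact IH|].
    intros w Hw. rewrite map_map. apply (children_tile K P c w HP). eapply words_alph; eauto.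
Qed.

Lemma exp_le a b : a <= b -> exp a <= exp b.
Proof. intros [H|H]; [left; apply exp_increasing; auto | rewrite H; lra]. Qed.

Lemma ln2_pos : 0 < ln 2.
Proof. rewrite <- ln_1. apply ln_increasing; lra. Qed.

Lemma logS p lam : 0 < p -> log2 (1 / p) >= lam -> p <= Rpower 2 (- lam).
Proof.
  intros Hp H. unfold log2, Rpower in *. pose proof ln2_pos.
  assert (H1 : ln (1/p) >= lam * ln 2).
  { apply Rge_le in H. apply Rle_ge.
    replace (ln (1/p)) with (ln (1/p) / ln 2 * ln 2) by (field; lra).
    apply Rmult_le_compat_r; lra. }
  unfold Rdiv in H1. rewrite Rmult_1_l, ln_Rinv in H1 by auto.
  rewrite <- (exp_ln p) at 1 by auto. apply exp_le. lra.
Qed.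

Lemma logT p tau : 0 < p -> log2 (1 / p) <= tau -> 1 <= Rpower 2 tau * p.
Proof.
  intros Hp H. unfold log2, Rpower in *. pose proof ln2_pos.
  assert (H1 : ln (1/p) <= tau * ln 2).
  { replace (ln (1/p)) with (ln (1/p) / ln 2 * ln 2) by (field; lra).
    apply Rmult_le_compat_r; lra. }
  unfold Rdiv in H1. rewrite Rmult_1_l, ln_Rinv in H1 by auto.
  rewrite <- (exp_ln p) by auto. rewrite <- exp_plus. rewrite <- exp_0. apply exp_le. lra.
Qed.

Lemma key I J eps : ~ subint I J -> lenI I <= eps -> 0 < eps ->
  ov I J <= eps * (inside (fst J) I + inside (snd J) I).
Proof.
  destruct I as [a b], J as [c d]. unfold lenI; simpl. intros Hns Hle Heps.
  assert (Hcase : a < c \/ d < b).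
  { destruct (Rle_dec c a); destruct (Rle_dec b d).
    - exfalso; apply Hns; intros t Ht; simpl in *; lra.
    - right; lra.
    - left; lra.
    - left; lra. }
  pose proof (ind_ge0 (a < c < b)) as I1. pose proof (ind_ge0 (a < d < b)) as I2.
  unfold ov, inside; simpl.
  destruct (Rle_dec (Rmin b d - Rmax a c) 0) as [Hn|Hp].
  - rewrite Rmax_left by lra. assert (0 <= eps * (ind (a < c < b) + ind (a < d < b))).
    { apply Rmult_le_pos; lra. } lra.
  - rewrite Rmax_right by lra.
    pose proof (Rmin_l b d). pose proof (Rmin_r b d). pose proof (Rmax_l a c). pose proof (Rmax_r a c).
    destruct Hcase as [Hac|Hdb].
    + assert (E : ind (a < c < b) = 1).
      { unfold ind; destruct excluded_middle_informative as [_|n]; [reflexivity|].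
        exfalso; apply n; split; lra. }
      rewrite E. assert (0 <= eps * ind (a < d < b)) by (apply Rmult_le_pos; lra). lra.
    + assert (E : ind (a < d < b) = 1).
      { unfold ind; destruct excluded_middle_informative as [_|n]; [reflexivity|].
        exfalso; apply n; split; lra. }
      rewrite E. assert (0 <= eps * ind (a < c < b)) by (apply Rmult_le_pos; lra). lra.
Qed.

Theorem theorem2 (M N n : nat)
  (PX : list nat -> R) (cX : list nat -> nat -> R)
  (PY : list nat -> R) (cY : list nat -> nat -> R)
  (HX : process M PX cX) (HY : process N PY cY)
  (m : nat) (lam tau : R) (Hlam : 0 <= lam) (Htau : 0 <= tau) :
  prob M m PX (fun xm => ~ stopped cX cY N n xm)
  <= prob M m PX (fun xm => ~ S_set PX lam xm)
     + prob N n PY (fun yn => ~ T_set PY tau yn)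
     + Rpower 2 (- lam + tau + 1).
Proof.
  unfold prob.
  set (WX := words M m). set (WY := words N n).
  set (eps := Rpower 2 (- lam)).
  assert (Heps : 0 < eps) by (unfold eps, Rpower; apply exp_pos).
  assert (Ht : 0 < Rpower 2 tau) by (unfold Rpower; apply exp_pos).
  pose proof (words_tile M PX cX m HX) as TX. fold WX in TX.
  pose proof (words_tile N PY cY n HY) as TY. fold WY in TY.
  set (bad := fun x => (forall y, In y WY -> ~ subint (interval cX x) (interval cY y))
                       /\ lenI (interval cX x) <= eps).
  assert (H1 : sumR (map (fun w => if excluded_middle_informative (~ stopped cX cY N n w) then PX w else 0) WX)
    <= sumR (map (fun w => (if excluded_middle_informative (~ S_set PX lam w) then PX w else 0)
                            + ind (bad w) * lenI (interval cX w)) WX)).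
  { apply sumR_le. intros x Hx.
    destruct (proc_len M PX cX x HX (words_alph _ _ _ Hx)) as [Hl Hp].
    assert (0 <= ind (bad x) * lenI (interval cX x)) by (apply Rmult_le_pos; [apply ind_ge0|lra]).
    destruct (excluded_middle_informative (~ stopped cX cY N n x)) as [Hns|Hs].
    - destruct (excluded_middle_informative (~ S_set PX lam x)) as [HnS|HS]; [lra|].
      destruct (Req_dec (PX x) 0) as [Z|NZ]; [lra|].
      assert (HS' : S_set PX lam x) by (apply NNPP; exact HS).
      assert (Hb : bad x).
      { split.
        - intros y Hy Hsub. apply Hns. exists (length x). split; [lia|].
          exists y. split; [exact Hy|]. rewrite firstn_all. exact Hsub.
        - rewrite Hl. destruct HS' as [Z|HS']; [contradiction|].
          apply logS; auto. lra. }
      unfold ind; destruct excluded_middle_informative; [|contradiction]. lra.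
    - destruct excluded_middle_informative; lra. }
  rewrite sumR_plus in H1.
  assert (H2 : sumR (map (fun w => ind (bad w) * lenI (interval cX w)) WX)
     = sumR (map (fun y => sumR (map (fun x => ind (bad x) * ov (interval cX x) (interval cY y)) WX)) WY)).
  { rewrite <- (sumR_swap (fun x y => ind (bad x) * ov (interval cX x) (interval cY y))).
    apply sumR_ext. intros x Hx. rewrite sumR_scal. f_equal.
    assert (Hin : In (interval cX x) (map (interval cX) WX)) by (apply in_map; auto).
    destruct (tiles_in _ _ _ _ TX Hin) as [? [? ?]].
    rewrite <- (map_map (interval cY) (ov (interval cX x))).
    symmetry. eapply ov_sum; eauto. }
  assert (H3 : forall y, In y WY ->
    sumR (map (fun x => ind (bad x) * ov (interval cX x) (interval cY y)) WX)
    <= (if excluded_middle_informative (~ T_set PY tau y) then PY y else 0)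
       + 2 * eps * Rpower 2 tau * PY y).
  { intros y Hy.
    destruct (proc_len N PY cY y HY (words_alph _ _ _ Hy)) as [Hl Hp].
    assert (HinY : In (interval cY y) (map (interval cY) WY)) by (apply in_map; auto).
    destruct (tiles_in _ _ _ _ TY HinY) as [? [? ?]].
    destruct excluded_middle_informative as [HnT|HT].
    - assert (0 <= 2 * eps * Rpower 2 tau * PY y).
      { apply Rmult_le_pos; [|lra]. apply Rmult_le_pos; lra. }
      assert (H6 : sumR (map (fun x => ind (bad x) * ov (interval cX x) (interval cY y)) WX)
              <= sumR (map (fun x => ov (interval cY y) (interval cX x)) WX)).
      { apply sumR_le. intros x _. rewrite ov_sym.
        pose proof (ind_le1 (bad x)). pose proof (ind_ge0 (bad x)).
        pose proof (ov_ge0 (interval cY y) (interval cX x)). nra. }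
      rewrite <- (map_map (interval cX) (ov (interval cY y))) in H6.
      rewrite (ov_sum _ _ _ _ TX) in H6 by lra. lra.
    - assert (HT' : T_set PY tau y) by (apply NNPP; exact HT).
      destruct HT' as [Hpos Hlog]. pose proof (logT _ _ Hpos Hlog).
      assert (H7 : sumR (map (fun x => ind (bad x) * ov (interval cX x) (interval cY y)) WX)
        <= sumR (map (fun x => eps * (inside (fst (interval cY y)) (interval cX x)
                                    + inside (snd (interval cY y)) (interval cX x))) WX)).
      { apply sumR_le. intros x _.
        pose proof (ind_ge0 (inside (fst (interval cY y)) (interval cX x) = 0)).
        unfold ind at 1. destruct excluded_middle_informative as [[Hb1 Hb2]|].
        - rewrite Rmult_1_l. apply key; auto.
        - rewrite Rmult_0_l. apply Rmult_le_pos; [lra|].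
          pose proof (ind_ge0 (fst (interval cX x) < fst (interval cY y) < snd (interval cX x))).
          pose proof (ind_ge0 (fst (interval cX x) < snd (interval cY y) < snd (interval cX x))).
          unfold inside. lra. }
      rewrite sumR_scal, sumR_plus in H7.
      rewrite <- (map_map (interval cX) (inside (fst (interval cY y)))) in H7.
      rewrite <- (map_map (interval cX) (inside (snd (interval cY y)))) in H7.
      pose proof (inside_le1 _ _ _ (fst (interval cY y)) TX).
      pose proof (inside_le1 _ _ _ (snd (interval cY y)) TX).
      assert (eps * (sumR (map (inside (fst (interval cY y))) (map (interval cX) WX))
        + sumR (map (inside (snd (interval cY y))) (map (interval cX) WX))) <= eps * 2).
      { apply Rmult_le_compat_l; lra. }
      nra. }
  assert (H4 := sumR_le _ _ WY H3). rewrite sumR_plus, sumR_scal in H4.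
  assert (HsY : sumR (map PY WY) = 1).
  { replace 1 with (1 - 0) by ring. rewrite <- (tiles_sum _ _ _ TY). rewrite map_map. symmetry. apply sumR_ext.
    intros y Hy. apply (proc_len N PY cY y HY (words_alph _ _ _ Hy)). }
  rewrite HsY in H4.
  assert (Hpow : Rpower 2 (- lam + tau + 1) = 2 * eps * Rpower 2 tau).
  { unfold eps. rewrite !Rpower_plus, Rpower_1 by lra. ring. }
  rewrite Hpow. lra.
Qed.
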